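(* Let $U$ be a countably infinite universe, $\mathcal{C}=(L_1,L_2,\ldots)$ a countably infinite collection of languages over $U$, and consider the Noisy Procedure in the context. For any $n\ge0$, $i\ge1$, and any step $l\ge p(n,i)$ (where $p(n,i)$ is the position of $(n,i)$ in the diagonal order), let $k$ be the position of the entry $L_{n,i}$ in $\mathcal{C}'_l=(L'_1,\ldots,L'_l)$ at the end of step $l$. Then $T(L_{n,i})$ is a set of maximum size among all sets $T$ satisfying: $T$ is finite, and there exists a subcollection $\mathcal{D}$ of the entries $(L'_1,\ldots,L'_k)$ that includes $L'_k$, whose intersection $\bigcap_{L_{a,b}\in\mathcal{D}}L_b$ is finite, and such that $T$ is $a$-contained in $L_b$ for every entry $L_{a,b}\in\mathcal{D}$.
   Context: A language is an infinite subset of $U$; a collection is a sequence of languages (repetitions allowed, entries distinguished by index). For a set $T$, language $L$ and integer $a\ge0$, $T$ is $a$-contained in $L$ if $\sum_{x\in T}\mathbf{1}[x\notin L]\le a$. Diagonal order: pairs $(n,i)$, $n\ge0$, $i\ge1$, ordered as $(0,1),(1,1),(0,2),(2,1),(1,2),(0,3),\ldots$, i.e. for $n'=0,1,2,\ldots$ and $h=0,\ldots,n'$ the pair $(n'-h,h+1)$. Each pair $(a,b)$ has an entry $L_{a,b}$, a copy of $L_b$ labelled $(a,b)$. Noisy Procedure. Set $\mathcal{C}'_0=()$. For $l=1,2,\ldots$, let $(n,i)$ be the $l$-th pair; append $L_{n,i}$ to the end of $\mathcal{C}'_{l-1}$ to get $\mathcal{C}'_l=(L'_1,\ldots,L'_l)$,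 set $j=l$. Repeat: (A) let $T$ be a finite subset of $U$ of largest size for which there is a subcollection $\mathcal{D}$ of the entries $(L'_1,\ldots,L'_j)$ including $L'_j$, with $T$ $a$-contained in $L_b$ for every entry $L_{a,b}\in\mathcal{D}$ and $\bigcap_{L_{a,b}\in\mathcal{D}}L_b$ finite; let $\mathcal{C}_{\mathrm{chk}}$ be such a $\mathcal{D}$ and $m_{\mathrm{chk}}=|T|$ ($0$ if no such $\mathcal{D}$ exists). (B) If $j\le1$ or $m_{\mathrm{chk}}>m^\star_a(L_b)$ where $L'_{j-1}=L_{a,b}$, stop. (C) Otherwise swap the entries at positions $j-1,j$ in $\mathcal{C}'_l$, set $j\leftarrow j-1$, return to (A). On stopping, set $T(L_{n,i})=T$, $\mathcal{C}(L_{n,i})=\mathcal{C}_{\mathrm{chk}}$, $m^\star_n(L_i)=m_{\mathrm{chk}}$; the ordering $\mathcal{C}'_l$ at the end of step $l$ is the one obtained when this loop stops. *)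

(* Defs.v *)
From mathcomp Require Import all_boot.
From mathcomp Require Import boolp classical_sets cardinality.

Set Implicit Arguments.
Unset Strict Implicit.
Unset Printing Implicit Defensive.

Local Open Scope classical_set_scope.

(* An entry L_{a,b} of the procedure is represented by its label (a, b). *)
Definition entry := (nat * nat)%type.

(* Diagonal order: (0,1),(1,1),(0,2),(2,1),(1,2),(0,3),...
   diag_pair q is the (q+1)-th pair (i.e. the pair processed at step q+1). *)
Definition next_pair (e : entry) : entry :=
  let: (a, b) := e in if a is a'.+1 then (a', b.+1) else (b, 1).

Fixpoint diag_pair (q : nat) : entry :=
  if q is q'.+1 then next_pair (diag_pair q') else (0, 1).

Section Noisy.
Variable U : choiceType.
Variable L : nat -> set U.   (* the collection: L b is the language L_b, b >= 1 *)

Definition a_contained (T : seq U) (A : set U) (a : nat) : bool :=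
  count (fun x => x \notin A) T <= a.

(* T is admissible for the prefix s = (L'_1, ..., L'_j): T is a finite set
   (a duplicate-free list) and there is a subcollection D of the entries of s
   containing L'_j (the last entry of s), with finite intersection of the
   underlying languages, such that T is a-contained in L_b for every L_{a,b} in D. *)
Definition admissible (s : seq entry) (T : seq U) : Prop :=
  uniq T /\
  exists D : seq entry,
    {subset D <= s} /\ last (0, 0) s \in D /\
    finite_set [set x | forall e, e \in D -> L e.2 x] /\
    (forall e, e \in D -> a_contained T (L e.2) e.1).

(* m is m_chk for the prefix s: the largest size of an admissible T
   (0 if there is no admissible T). *)
Definition max_size (s : seq entry) (m : nat) : Prop :=
  ((exists T, admissible s T /\ size T = m) \/
   ((forall T, ~ admissible s T) /\ m = 0)) /\
  (forall T, admissible s T -> size T <= m).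

(* T is a valid choice of T in step (A) for prefix s: an admissible set of
   largest size (the empty set if there is no admissible set). *)
Definition max_choice (s : seq entry) (T : seq U) : Prop :=
  (admissible s T \/ ((forall T', ~ admissible s T') /\ T = [::])) /\
  (forall T', admissible s T' -> size T' <= size T).

Definition swap_adj (s : seq entry) (p : nat) : seq entry :=
  take p s ++ [:: nth (0, 0) s p.+1; nth (0, 0) s p] ++ drop p.+2 s.

(* The inner loop (A)-(C).  inner mstar C j C' jf : starting from ordering C
   with current index j (1-based), the loop stops with ordering C' and index jf.
   L'_j = nth (j-1) C, L'_{j-1} = nth (j-2) C. *)
Inductive inner (mstar : entry -> nat) : seq entry -> nat -> seq entry -> nat -> Prop :=
| inner_stop C j m :
    max_size (take j C) m ->
    (j <= 1 \/ mstar (nth (0, 0) C (j - 2)) < m) ->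
    inner mstar C j C j
| inner_swap C j m C' jf :
    max_size (take j C) m ->
    1 < j -> m <= mstar (nth (0, 0) C (j - 2)) ->
    inner mstar (swap_adj C (j - 2)) j.-1 C' jf ->
    inner mstar C j C' jf.

(* A run of the Noisy Procedure: C l = C'_l (ordering at the end of step l),
   mstar (n,i) = m*_n(L_i), Tmap (n,i) = T(L_{n,i}). *)
Definition noisy_run (C : nat -> seq entry) (mstar : entry -> nat)
    (Tmap : entry -> seq U) : Prop :=
  C 0 = [::] /\
  forall l, let e := diag_pair l in
    exists j,
      inner mstar (rcons (C l) e) l.+1 (C l.+1) j /\
      max_choice (take j (C l.+1)) (Tmap e) /\
      mstar e = size (Tmap e).

End Noisy.

(* Main.v *)
Require Import Defs.
From mathcomp Require Import all_boot.
From mathcomp Require Import boolp classical_sets cardinality.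
From mathcomp Require Import zify.

Set Implicit Arguments.
Unset Strict Implicit.
Unset Printing Implicit Defensive.

Fixpoint tri (s : nat) : nat := if s is s'.+1 then tri s' + s else 0.
Definition rank (e : entry) := tri (e.1 + e.2 - 1) + e.2 - 1.

Lemma diag_b q : 1 <= (diag_pair q).2.
Proof. elim: q => [//|q IH] /=; case: (diag_pair q) IH => [[|a] b] //=. Qed.

Lemma rank_diag q : rank (diag_pair q) = q.
Proof.
elim: q => [//|q IH] /=; move: IH (diag_b q); case: (diag_pair q) => [[|a] b] /=.
- rewrite /rank /= => <-; case: b => [//|b] _ /=.
  have -> : 0 + b.+1 - 1 = b by lia.
  have -> : b.+1 + 1 - 1 = b.+1 by lia.
  simpl tri; lia.
- rewrite /rank /= => <- hb.
  have -> : a.+1 + b - 1 = a + b by lia.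
  have -> : a + b.+1 - 1 = a + b by lia.
  lia.
Qed.

Lemma diag_inj : injective diag_pair.
Proof. by move=> x y h; rewrite -(rank_diag x) h rank_diag. Qed.

Definition pre (s : seq entry) e := take (index e s).+1 s.

Lemma pre_catl s1 s2 e : e \in s1 -> pre (s1 ++ s2) e = pre s1 e.
Proof.
move=> h; rewrite /pre index_cat h takel_cat //.
by rewrite index_mem.
Qed.

Lemma pre_catr s1 s2 e : e \notin s1 -> pre (s1 ++ s2) e = s1 ++ pre s2 e.
Proof.
move=> h; rewrite /pre index_cat (negbTE h) take_cat ltnNge -addnS leq_addr /=.
by rewrite addKn.
Qed.

Lemma pre_cons s e y : y != e -> pre (y :: s) e = y :: pre s e.
Proof. by move=> h; rewrite /pre /= (negbTE h). Qed.

Lemma pre_head s e : pre (e :: s) e = [:: e].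
Proof. by rewrite /pre /= eqxx /= take0. Qed.

Lemma last_pre s e d : e \in s -> last d (pre s e) = e.
Proof.
move=> h; rewrite /pre (take_nth (0,0)) ?index_mem // last_rcons.
exact: nth_index.
Qed.

Lemma swap_cat (a : seq entry) x y b :
  swap_adj (a ++ x :: y :: b) (size a) = a ++ y :: x :: b.
Proof.
rewrite /swap_adj take_size_cat // !nth_cat ltnn ltnNge leqnSn /= subnn subSnn /=.
by rewrite drop_cat ltnNge (leq_trans (leqnSn _) (leqnSn _)) /= -addn2 addKn /= drop0.
Qed.

Lemma perm_swap (a : seq entry) x y b :
  perm_eq (a ++ x :: y :: b) (a ++ y :: x :: b).
Proof. by rewrite perm_cat2l (perm_catCA [:: x] [:: y] b). Qed.

Lemma take2_cat (a : seq entry) x y b :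
  take (size a).+2 (a ++ x :: y :: b) = a ++ [:: x; y].
Proof.
by rewrite -[a ++ _]/(a ++ [:: x; y] ++ b) catA take_size_cat ?size_cat ?addn2.
Qed.

Section Aux.
Variable U : choiceType.
Variable L : nat -> set U.

Lemma adm_mono s1 s2 T : {subset s1 <= s2} -> last (0,0) s1 = last (0,0) s2 ->
  admissible L s1 T -> admissible L s2 T.
Proof.
move=> sub hl [uT [D [hD [hlast rest]]]]; split=> //; exists D; split.
  by move=> x /hD /sub.
by rewrite -hl; split.
Qed.

Lemma max_choice_extend s s' T0 :
  (forall T, admissible L s' T -> admissible L s T \/ size T <= size T0) ->
  (forall T, admissible L s T -> admissible L s' T) ->
  max_choice L s T0 -> max_choice L s' T0.
Proof.
move=> h1 h2 [[hA|[hN hT0]] hM].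
- split; first by left; apply: h2.
  by move=> T' /h1 [/hM //|//].
- split; last first.
    by move=> T' /h1 [/hN []|//].
  have [[T' hT']|hn] := pselect (exists T', admissible L s' T').
  + left; have := h1 _ hT'; case=> [/hN []|].
    rewrite hT0 leqn0 => /nilP hT'0.
    by rewrite -hT'0.
  + right; split => // T' hT'; apply: hn; by exists T'.
Qed.

Lemma inner_shape mstar C j C' jf f : inner L mstar C j C' jf ->
  forall a b, C = a ++ f :: b -> j = (size a).+1 ->
  exists a' b', C' = a' ++ f :: b' /\ jf = (size a').+1 /\ perm_eq C C'.
Proof.
elim => {C j C' jf} [C j m _ _ | C j m C' jf _ hj _ _ IH] a b hC hJ; subst C j.
  by exists a, b; split => //; split => //; apply: perm_refl.
case/lastP: a hj IH => [//|a' x] _.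
rewrite size_rcons /= -cats1 -catA /= subn2 /= swap_cat => IH.
have [a'' [b'' [h1 [h2 h3]]]] := IH a' (x :: b) erefl erefl.
exists a'', b''; split => //; split => //.
exact: perm_trans (perm_swap _ _ _ _) h3.
Qed.

Lemma inner_inv (mstar : entry -> nat) (Tm : seq U) e f C j C' jf :
  inner L mstar C j C' jf ->
  forall a b, C = a ++ f :: b -> j = (size a).+1 ->
  e \in C -> e != f -> mstar e = size Tm ->
  max_choice L (pre C e) Tm -> max_choice L (pre C' e) Tm.
Proof.
elim => {C j C' jf} [C j m _ _ | C j m C' jf hm hj hle _ IH] a b hC hJ; subst C j => //.
case/lastP: a hj hle IH hm => [//|a' x] _.
rewrite size_rcons /= -cats1 -catA /= subn2 /= swap_cat => hle IH hm he hef hms hmc.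
apply: (IH a' (x :: b)) => //.
  by rewrite -(perm_mem (perm_swap _ _ _ _)).
case: (boolP (e \in a')) => ea.
  by move: hmc; rewrite !pre_catl.
move: hmc; rewrite !pre_catr //.
case: (eqVneq e x) => [exe|nex].
  subst x; rewrite pre_head pre_cons 1?eq_sym // pre_head /= => hmc.
  apply: (max_choice_extend _ _ hmc).
  - move=> T [uT [D [hD [hlast [hfin hc]]]]].
    case: (boolP (f \in D)) => fD.
    + right; rewrite -hms.
      have hx : nth (0, 0) (a' ++ e :: f :: b) (size a') = e
        by rewrite nth_cat ltnn subnn.
      rewrite hx in hle; apply: leq_trans hle.
      apply: hm.2; split => //; exists D; split.
        move=> y yD; have := hD _ yD.
        have -> : take (size a').+2 (a' ++ e :: f :: b) = a' ++ [:: e; f].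
          exact: take2_cat.
        by rewrite !mem_cat !inE => /orP [->//|/orP [->|->]]; rewrite !orbT.
      have -> : take (size a').+2 (a' ++ e :: f :: b) = a' ++ [:: e; f].
        exact: take2_cat.
      by rewrite last_cat /=; split.
    + left; split => //; exists D; split.
        move=> y yD; have := hD _ yD; rewrite !mem_cat !inE.
        case/orP => [->//|/orP [/eqP eyf|->]]; last by rewrite orbT.
        by rewrite -eyf yD in fD.
      by move: hlast; rewrite !last_cat /= => hlast; split.
  - move=> T; apply: adm_mono; last by rewrite !last_cat.
    by move=> y; rewrite !mem_cat !inE => /orP [->//|->]; rewrite !orbT.
have eb : e \in b.
  by move: he; rewrite !mem_cat !inE (negbTE ea) (negbTE nex) (negbTE hef).
have nxe : x != e by rewrite eq_sym.
have nfe : f != e by rewrite eq_sym.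
rewrite !pre_cons // => hmc.
have hl : forall y z, last (0,0) (a' ++ y :: z :: pre b e) = e.
  by move=> y z; rewrite last_cat /= last_pre.
apply: (max_choice_extend _ _ hmc).
- move=> T hT; left; apply: adm_mono hT; last by rewrite !hl.
  by move=> y; rewrite (perm_mem (perm_swap _ _ _ _)).
- move=> T; apply: adm_mono; last by rewrite !hl.
  by move=> y; rewrite (perm_mem (perm_swap _ _ _ _)).
Qed.

End Aux.

Theorem mainTheorem15 (U : countType) (L : nat -> set U)
    (U_inf : infinite_set [set: U])
    (L_inf : forall b, 1 <= b -> infinite_set (L b))
    (C : nat -> seq entry) (mstar : entry -> nat) (Tmap : entry -> seq U)
    (run : noisy_run L C mstar Tmap)
    (n i q l : nat) (Hi : 1 <= i) (Hq : diag_pair q = (n, i)) (Hl : q < l) :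
  let k := (index (n, i) (C l)).+1 in
  max_choice L (take k (C l)) (Tmap (n, i)).
Proof.
case: run => h0 hrun.
have permC : forall l, perm_eq (C l) (map diag_pair (iota 0 l)).
  elim => [|l' IH]; first by rewrite h0.
  case: (hrun l') => j [hin _].
  have hs : size (C l') = l' by rewrite (perm_size IH) size_map size_iota.
  have [a' [b' [_ [_ hp]]]] := inner_shape hin (a := C l') (b := [::]) (esym (cats1 _ _)) (congr1 S (esym hs)).
  have -> : iota 0 l'.+1 = rcons (iota 0 l') l' by rewrite -addn1 iotaD cats1.
  rewrite map_rcons.
  by rewrite -(permPl hp) -!cats1 perm_cat2r.
have uniqC : forall l, uniq (C l).
  by move=> l'; rewrite (perm_uniq (permC l')) (map_inj_uniq diag_inj) iota_uniq.
have memC : forall l x, x \in C l = (x \in map diag_pair (iota 0 l)).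
  by move=> l' x; rewrite (perm_mem (permC l')).
set e := diag_pair q.
suff : e \in C l /\ max_choice L (pre (C l) e) (Tmap e) by rewrite /e Hq => -[].
elim: l Hl => [//|l IH] Hl.
case: (ltngtP q l) Hl => [ql _| lq hql| <- _].
- have [eC hmc] := IH ql.
  case: (hrun l) => j [hin _].
  case: (hrun q) => _ [_ [_ hms]].
  have hs : size (C l) = l by rewrite (perm_size (permC l)) size_map size_iota.
  have hef : e != diag_pair l.
    by apply/eqP => /diag_inj h; rewrite h ltnn in ql.
  have [a0 [b0 [_ [_ hp]]]] := inner_shape hin (a := C l) (b := [::]) (esym (cats1 _ _)) (congr1 S (esym hs)).
  split; first by rewrite -(perm_mem hp) mem_rcons inE eC orbT.
  apply: (inner_inv hin (a := C l) (b := [::])) => //.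
  - exact: (esym (cats1 _ _)).
  - by rewrite hs.
  - by rewrite mem_rcons inE eC orbT.
  - by [].
  - by rewrite -cats1 pre_catl.
- by exfalso; lia.
- case: (hrun q) => j [hin [hmc hms]].
  have hs : size (C q) = q by rewrite (perm_size (permC q)) size_map size_iota.
  have [a' [b' [hC [hj hp]]]] := inner_shape hin (a := C q) (b := [::]) (esym (cats1 _ _)) (congr1 S (esym hs)).
  have ea : e \notin a'.
    by move: (uniqC q.+1); rewrite hC cat_uniq /= => /and3P [_ /norP [] ].
  split; first by rewrite hC mem_cat mem_head orbT.
  by rewrite /pre hC index_cat (negbTE ea) /= eqxx addn0 -hC -hj.
Qed.
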